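(* Let $K\ge1$, $p_D\in(0,1]$, and for each $y\in[K]$ let $p_y^+>0$, $p_y^->0$ with $\sum_y(p_y^++p_y^-)=1$, $p_y:=p_y^++p_y^-$, $p^\pm:=\sum_yp_y^\pm$, and let $C^\pm_{y,y}\in[0,1)$ be fixed. For unknowns $(q_y,q_y^+)_y$ define \[ \Delta\mathrm{eq.opp.}(y)=\frac{p_D}{p_y^+p_y^-}(C^+_{y,y}-1)(q_yp_y^+-p_yq_y^+)+(C^+_{y,y}-C^-_{y,y})\Bigl(1-p_D\frac{q_y-q_y^+}{p_y^-}\Bigr). \] If either $p_D<p^-\min_y\frac{C^+_{y,y}-C^-_{y,y}}{1-C^-_{y,y}}$ or $p_D<p^+\min_y\frac{C^-_{y,y}-C^+_{y,y}}{1-C^+_{y,y}}$, then there exist no $(q_y,q_y^+)_y$ with $\sum_yq_y=1$, $0\le q_y^+\le q_y$ for all $y$, and $\Delta\mathrm{eq.opp.}(y)=0$ for all $y$.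
   Context: Interpretation: $p_D=\mathbb{P}(D=1)$ (memorized mass), $p_y^\pm=\mathbb{P}(Y=y,A=1\text{ resp. }0)$, $q_y=\mathbb{P}(Y=y\mid D=1)$, $q_y^+=\mathbb{P}(Y=y,A=1\mid D=1)$, $C^\pm_{y,y}$ the base classifier's true-positive rates for label $y$ on the unmemorized part in group $A=1$ resp. $A=0$; the formula is the equal opportunity gap of the memorizing classifier, with $C^\pm$ treated as fixed parameters. *)

(* Defs.v *)
From mathcomp Require Import all_boot all_order all_algebra.
Set Implicit Arguments. Unset Strict Implicit. Unset Printing Implicit Defensive.
Import Order.TTheory GRing.Theory Num.Theory.
Local Open Scope ring_scope.

(* Minimum over y in [K] of f y; i0 is any element of 'I_K (used as the seed
   of the fold, which does not change the value since f i0 is among the terms). *)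
Definition fmin (R : realDomainType) (K : nat) (i0 : 'I_K) (f : 'I_K -> R) : R :=
  \big[Num.min/f i0]_(i < K) f i.

Definition delta_eqopp (R : realFieldType) (K : nat)
  (pD : R) (pp pm Cp Cm q qp : 'I_K -> R) (y : 'I_K) : R :=
  pD / (pp y * pm y) * (Cp y - 1) * (q y * pp y - (pp y + pm y) * qp y)
  + (Cp y - Cm y) * (1 - pD * ((q y - qp y) / pm y)).

(* Main.v *)
Require Import Defs.
From mathcomp Require Import all_boot all_order all_algebra.
From mathcomp Require Import ring lra.
Import Order.TTheory GRing.Theory Num.Theory.
Set Implicit Arguments. Unset Strict Implicit.
Local Open Scope ring_scope.

Lemma fmin_le (R : realDomainType) K (i0 : 'I_K) (f : 'I_K -> R) y : fmin i0 f <= f y.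
Proof.
rewrite /fmin (bigD1 y) //= ge_min lexx //.
Qed.

Lemma key (R : realFieldType) (pD pp pm a b q s : R) :
  0 < pp -> 0 < pm ->
  pD / (pp * pm) * (a - 1) * (q * pp - (pp + pm) * s)
  + (a - b) * (1 - pD * ((q - s) / pm)) = 0 ->
  pD * (q - s) * (1 - b) * pp = (a - b) * pp * pm + pD * (1 - a) * s * pm.
Proof.
move=> hp hm h.
have e : pD * (q - s) * (1 - b) * pp - ((a - b) * pp * pm + pD * (1 - a) * s * pm)
  = - ((pD / (pp * pm) * (a - 1) * (q * pp - (pp + pm) * s)
  + (a - b) * (1 - pD * ((q - s) / pm))) * (pp * pm)).
  field; apply/andP; split; rewrite gt_eqF //.
by apply/eqP; rewrite -subr_eq0 e h mul0r oppr0.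
Qed.

Lemma bound (R : realFieldType) (pD pp pm a b r s t : R) :
  0 < pp -> 0 < pm -> b < 1 -> a < 1 -> 0 <= s -> 0 <= pD ->
  pD * r * (1 - b) * pp = (a - b) * pp * pm + pD * (1 - a) * s * pm ->
  t <= (a - b) / (1 - b) -> pm * t <= pD * r.
Proof.
move=> hp hm hb ha hs hD e ht.
have h1 : (a - b) = (a - b) / (1 - b) * (1 - b) by field; rewrite subr_eq0 eq_sym lt_eqF.
set u := (a - b) / (1 - b) in h1 ht.
rewrite h1 in e.
have h2 : 0 <= pD * (1 - a) * s * pm.
  apply: mulr_ge0 => //; last exact: ltW.
  apply: mulr_ge0 => //; apply: mulr_ge0 => //; lra.
have h3 : u * pm * ((1 - b) * pp) <= pD * r * ((1 - b) * pp) by nra.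
have h4 : 0 < (1 - b) * pp by apply: mulr_gt0 => //; lra.
rewrite ler_pM2r // in h3.
nra.
Qed.

Theorem corollary14 (R : realFieldType) (K : nat) (hK : (0 < K)%N)
  (pD : R) (pp pm Cp Cm : 'I_K -> R) :
  0 < pD -> pD <= 1 ->
  (forall y, 0 < pp y) -> (forall y, 0 < pm y) ->
  \sum_(y < K) (pp y + pm y) = 1 ->
  (forall y, 0 <= Cp y < 1) -> (forall y, 0 <= Cm y < 1) ->
  (pD < (\sum_(y < K) pm y) *
          fmin (Ordinal hK) (fun y => (Cp y - Cm y) / (1 - Cm y))
   \/ pD < (\sum_(y < K) pp y) *
          fmin (Ordinal hK) (fun y => (Cm y - Cp y) / (1 - Cp y))) ->
  ~ (exists q qp : 'I_K -> R,
       \sum_(y < K) q y = 1 /\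
       (forall y, 0 <= qp y <= q y) /\
       (forall y, delta_eqopp pD pp pm Cp Cm q qp y = 0)).
Proof.
move=> hD0 hD1 hpp hpm _ hCp hCm hor [q [qp [hq [hqp hd]]]].
have E y := key (hpp y) (hpm y) (hd y).
have sq0 : 0 <= \sum_(y < K) qp y by apply: sumr_ge0 => y _; case/andP: (hqp y).
have sr0 : 0 <= \sum_(y < K) (q y - qp y).
  by apply: sumr_ge0 => y _; case/andP: (hqp y) => _; rewrite subr_ge0.
have sB : \sum_(y < K) (q y - qp y) + \sum_(y < K) qp y = 1.
  by rewrite -big_split /= -hq; apply: eq_bigr => y _; rewrite subrK.
case: hor => h.
- set m := fmin _ _ in h.
  have hs : \sum_(y < K) pm y * m <= \sum_(y < K) pD * (q y - qp y).
    apply: ler_sum => y _.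
    case/andP: (hCp y) => _ a1; case/andP: (hCm y) => _ b1.
    case/andP: (hqp y) => s0 _.
    apply: (bound (hpp y) (hpm y) b1 a1 s0 (ltW hD0) (E y)).
    exact: fmin_le.
  rewrite -mulr_suml -mulr_sumr in hs.
  nra.
- set m := fmin _ _ in h.
  have hs : \sum_(y < K) pp y * m <= \sum_(y < K) pD * qp y.
    apply: ler_sum => y _.
    case/andP: (hCp y) => _ a1; case/andP: (hCm y) => _ b1.
    case/andP: (hqp y) => s0 sq.
    have r0 : 0 <= q y - qp y by rewrite subr_ge0.
    apply: (bound (r := qp y) (s := q y - qp y) (hpm y) (hpp y) a1 b1 r0 (ltW hD0)).
      move: (E y); set u := q y - qp y; move=> e. nra.
    exact: fmin_le.
  rewrite -mulr_suml -mulr_sumr in hs.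
  nra.
Qed.
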